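(* Let $n\ge 1$ and let \[ f(x):=P(x)+iQ(x),\qquad P(x):=x^n+a_1x^{n-1}+a_2x^{n-2}+\cdots+a_n,\qquad Q(x):=b_1x^{n-1}+b_2x^{n-2}+\cdots+b_n, \] where all $a_i$ and $b_i$ are real. Suppose $f$ has (counting multiplicities) $n_+$ roots with positive imaginary part, $n_-$ roots with negative imaginary part and $n_0<n$ real roots, so $n_++n_-+n_0=n$. Let $d:=n-2\min\{n_+,n_-\}$. Then, counting multiplicities, there exist at least $d$ real roots $\mu_1,\mu_2,\ldots,\mu_d$ of $P$ and at least $d-1$ real roots $\nu_1,\nu_2,\ldots,\nu_{d-1}$ of $Q$ such that \[ \mu_1\le\nu_1\le\mu_2\le\nu_2\le\cdots\le\nu_{d-1}\le\mu_d . \] If $n_0=0$, then these inequalities may be taken to be strict.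
   Context: ''Counting multiplicities'' means that a root of multiplicity $m$ may appear up to $m$ times in the respective list. *)

(* Defs.v *)
From mathcomp Require Import all_boot all_order all_algebra.
From mathcomp Require Import complex.
Set Implicit Arguments. Unset Strict Implicit. Unset Printing Implicit Defensive.
Import Order.TTheory GRing.Theory Num.Theory.
Local Open Scope ring_scope.

Definition cpoly (R : rcfType) (p : {poly R}) : {poly R[i]} :=
  map_poly (fun x : R => Complex x 0) p.

Definition fpoly (R : rcfType) (P Q : {poly R}) : {poly R[i]} :=
  cpoly P + (Complex (0 : R) 1)%:P * cpoly Q.

(* Main.v *)
Require Import Defs.
From mathcomp Require Import all_boot all_order all_algebra.
From mathcomp Require Import complex polyorder polyrcf qe_rcf_th.
From mathcomp Require Import ring zify.
Set Implicit Arguments. Unset Strict Implicit. Unset Printing Implicit Defensive.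
Import Order.TTheory GRing.Theory Num.Theory Pdiv.Ring Pdiv.ComRing.
Local Open Scope ring_scope.

Section A.
Variable R : rcfType.
Implicit Types (A B p q r : {poly R}).

Definition decomp (g : {poly R[i]}) (A B : {poly R}) := forall i, g`_i = Complex A`_i B`_i.

Lemma decomp_fpoly P Q : decomp (fpoly P Q) P Q.
Proof.
move=> i; rewrite /fpoly coefD coefCM /cpoly !coef_map_id0 //.
by apply/eqP; rewrite eq_complex /=; apply/andP; split; apply/eqP; ring.
Qed.

Lemma decomp_mulX g A B z : decomp g A B ->
  decomp (('X - z%:P) * g) (('X - (complex.Re z)%:P) * A + (complex.Im z)%:P * B)
                          (('X - (complex.Re z)%:P) * B - (complex.Im z)%:P * A).
Proof.
move=> h i; rewrite !(mulrBl, coefB, coefD, coefXM, coefCM) !h.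
case: z => a b /=; case: i => [|i] /=.
  by apply/eqP; rewrite eq_complex /= !sub0r; apply/andP; split; apply/eqP; ring.
by apply/eqP; rewrite eq_complex /=; apply/andP; split; apply/eqP; ring.
Qed.

Lemma decomp_uniq g A B A' B' : decomp g A B -> decomp g A' B' -> A = A' /\ B = B'.
Proof.
move=> h1 h2; split; apply/polyP => i; have := h1 i; rewrite h2; by case.
Qed.

Lemma jump_addmul p k q x : q \is monic -> jump (p + k * q) q x = jump p q x.
Proof.
move=> mq; rewrite jump_mod [RHS]jump_mod (eqP mq) sgz1 !expr1n !mul1r.
by rewrite Pdiv.RingMonic.rmodpD // Pdiv.RingMonic.rmodp_mull // addr0.
Qed.

Lemma jump_pos r p q x : (forall y, 0 < r.[y]) -> jump (r * p) q x = jump p q x.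
Proof.
move=> rpos; have nr : forall y, ~~ root r y by move=> y; rewrite rootE gt_eqF.
have r0 : r != 0 by apply: contraNneq (nr 0) => ->; rewrite root0.
have [->|p0] := eqVneq p 0; first by rewrite mulr0.
rewrite /jump mulf_eq0 (negPf r0) (negPf p0) /= mu_mul ?mulf_neq0 // (muNroot (nr x)) add0n.
by rewrite -mulrA sgp_right_mul sgp_rightNroot // gtr0_sg // mul1r.
Qed.

Lemma cindexR_Z c p q : cindexR (c *: p) q = sgz c * cindexR p q.
Proof. by rewrite /cindexR big_distrr; apply: eq_bigr => x _; rewrite jump_mulCp. Qed.

Lemma cindexR_rmod p q : q \is monic -> cindexR (rmodp p q) q = cindexR p q.
Proof.
move=> mq; rewrite /cindexR; apply: eq_bigr => x _.
by rewrite [RHS]jump_mod (eqP mq) sgz1 expr1n mul1r.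
Qed.

Lemma cindexR_inv p q : q \is monic -> cindexR q p + cindexR p q = crossR (p * q).
Proof.
move=> mq; rewrite cindexR_rec /next_mod (eqP mq) expr1n scaleN1r.
rewrite -scaleN1r cindexR_Z cindexR_rmod // sgzN sgz1.
by rewrite mulN1r addrNK.
Qed.

Lemma KL_step A B (a b : R) : A \is monic -> (size B < size A)%N -> b != 0 ->
  cindexR (('X - a%:P) * B - b%:P * A) (('X - a%:P) * A + b%:P * B)
  = cindexR B A - sgz b.
Proof.
move=> mA sBA b0.
set u := 'X - a%:P; set A' := u * A + _; set B' := u * B - _.
have su : size u = 2%N by rewrite size_XsubC.
have A0 : A != 0 by apply: monic_neq0.
have suA : size (u * A)%R = (size A).+1.
  by rewrite size_monicM ?monicXsubC // su.
have sbB : (size (b%:P * B)%R < size (u * A)%R)%N.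
  by rewrite suA ltnS (leq_trans (size_polyMleq _ _)) // size_polyC b0 add1n ltnW.
have mA' : A' \is monic.
  by rewrite /A' monicE lead_coefDl // lead_coef_monicM ?monicXsubC // (eqP mA).
have sA' : size A' = (size A).+1 by rewrite /A' size_addl.
have h1 : cindexR A' A = sgz b * cindexR B A.
  rewrite -cindexR_Z /cindexR; apply: eq_bigr => x _.
  by rewrite /A' addrC jump_addmul // mul_polyC.
have h2 := cindexR_inv A mA'.
pose r := u ^+ 2 + b%:P ^+ 2.
have rpos : forall y, 0 < r.[y].
  move=> y; rewrite /r hornerD !horner_exp hornerC.
  by apply: ltr_wpDl; [exact: sqr_ge0 | rewrite exprn_even_gt0].
have h3 : sgz b * cindexR B' A' = - cindexR A A'.
  rewrite -cindexR_Z /cindexR -sumrN; apply: eq_bigr => x _.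
  have -> : b *: B' = (-1) *: (r * A) + u * A'.
    rewrite /B' /A' /r scaleN1r -mul_polyC; ring.
  by rewrite jump_addmul // jump_mulCp jump_pos // sgzN sgz1 mulN1r.

have h4 : crossR (A * A') = 1.
  have mAA : A * A' \is monic by rewrite monicMl.
  have sAA : size (A * A')%R = (size A + size A)%N.
    by rewrite size_monicM ?monic_neq0 // sA' addnS.
  rewrite /crossR /sgp_minfty /sgp_pinfty (eqP mAA) sAA /=.
  case sA: (size A) => [|s]; first by move: A0; rewrite -size_poly_eq0 sA.
  rewrite addSn addnS /= -signr_odd /= oddD addbb /= expr1 mulr1 sgrN sgr1.
  by rewrite /variation sgz1 mul1r mulr1 ltrN10.
have sb2 : sgz b * sgz b = 1 by move: b0; case: sgzP.
have hA : cindexR A A' = 1 - sgz b * cindexR B A by rewrite -h4 -h2 h1 addrAC subrr add0r.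
have -> : cindexR B' A' = sgz b * (sgz b * cindexR B' A') by rewrite mulrA sb2 mul1r.
by rewrite h3 hA opprB mulrBr mulrA sb2 mul1r mulr1.
Qed.
End A.

Lemma int_tri (x : int) : -1 <= x <= 1 -> x = -1 \/ x = 0 \/ x = 1.
Proof. move=> /andP [h1 h2]; lia. Qed.
Lemma int_L1 (S : int) (c : nat) : -1 + S <= - (c.+2)%:Z -> S <= - (c.+1)%:Z.
Proof. lia. Qed.
Lemma int_L2 (S : int) (c : nat) : 0 + S <= - (c.+1)%:Z -> S <= - (c.+1)%:Z.
Proof. lia. Qed.
Lemma int_L3 (S : int) (c : nat) : 1 + S <= - (c.+1)%:Z -> S <= - (c.+2)%:Z.
Proof. lia. Qed.
Lemma int_E1 (c : nat) : -1 + - c%:Z = - (c.+1)%:Z. Proof. lia. Qed.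
Lemma int_E2 (c : nat) : 0 + - c%:Z = - c%:Z. Proof. lia. Qed.
Lemma int_E3 (c : nat) : 1 + - (c.+1)%:Z = - c%:Z. Proof. lia. Qed.
Lemma int_le1 (S : int) (k : nat) : S <= - (k.+1)%:Z -> S <= -1. Proof. lia. Qed.
Lemma int_L4 (S : int) (k : nat) : S <= - (k.+2)%:Z -> S + 1 <= - (k.+1)%:Z. Proof. lia. Qed.
Lemma int_F0 (c : nat) : (0 : int) <= - (c.+1)%:Z -> False. Proof. lia. Qed.

Lemma first_neg (T : Type) (w : T -> int) (l : seq T) (c : nat) :
  (forall t, -1 <= w t <= 1) -> \sum_(t <- l) w t <= - (c.+1)%:Z ->
  exists l1 x l2, [/\ l = l1 ++ x :: l2, \sum_(t <- l1) w t = - c%:Z & w x = -1].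
Proof.
move=> hw; elim: l c => [|t l IH] c; first by rewrite big_nil => /int_F0.
rewrite big_cons => hs.
have [e|[e|e]] := int_tri (hw t); rewrite e in hs.
- case: c hs => [|c] hs; first by exists [::], t, l; rewrite big_nil.
  have [l1 [x [l2 [-> s1 wx]]]] := IH c (int_L1 hs).
  by exists (t :: l1), x, l2; rewrite big_cons s1 e int_E1.
- have [l1 [x [l2 [-> s1 wx]]]] := IH c (int_L2 hs).
  by exists (t :: l1), x, l2; rewrite big_cons s1 e int_E2.
- have [l1 [x [l2 [-> s1 wx]]]] := IH c.+1 (int_L3 hs).
  by exists (t :: l1), x, l2; rewrite big_cons s1 e int_E3.
Qed.

Section B.
Variable R : rcfType.
Implicit Types (A B p q : {poly R}).

Lemma roots_split p (a b x : R) : p != 0 -> x \in `]a, b[ ->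
  roots p a b = roots p a x ++ (if root p x then [:: x] else [::]) ++ roots p x b.
Proof.
move=> p0 hx; have /andP [ax xb] : (a < x) && (x < b) by rewrite in_itv in hx.
symmetry; apply: roots_uniq => //.
  move=> y; rewrite !mem_cat !in_roots p0 !andbT !in_itv /=.
  have hm : (y \in (if root p x then [:: x] else [::])) = (y == x) && root p x.
    by case: root; rewrite ?in_cons ?in_nil ?orbF ?andbT ?andbF.
  rewrite hm; have [yx|xy|->] := ltgtP y x.
  - by rewrite (lt_trans yx xb) /=; case: (a < y); case: root.
  - by rewrite (lt_trans ax xy) /=; case: (y < b); case: root.
  - by rewrite ax xb /=; case: root.
rewrite (sorted_pairwise lt_trans) !pairwise_cat -!(sorted_pairwise lt_trans).
rewrite !sorted_roots /= !andbT.
have ha : forall u, u \in roots p a x -> u < x by move=> u /roots_in; rewrite in_itv => /andP[].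
have hb : forall u, u \in roots p x b -> x < u by move=> u /roots_in; rewrite in_itv => /andP[].
apply/andP; split.
  apply/allrelP => u v hu; rewrite mem_cat => /orP [hv|hv].
    by move: hv; case: root; rewrite ?in_cons ?in_nil ?orbF // => /eqP ->; apply: ha.
  exact: lt_trans (ha u hu) (hb v hv).
apply/andP; split; last by case: root.
apply/allrelP => u v hu hv.
by move: hu; case: root; rewrite ?in_cons ?in_nil ?orbF // => /eqP ->; apply: hb.
Qed.


Fixpoint ilv (r : rel R) (mu nu : seq R) : bool :=
  match mu, nu with
  | [:: x], [::] => true
  | x :: mu', y :: nu' => [&& r x y, r y (head x mu') & ilv r mu' nu']
  | _, _ => false
  end.

Lemma ilv_cons (r : rel R) x x' m y n :
  ilv r (x :: x' :: m) (y :: n) = [&& r x y, r y x' & ilv r (x' :: m) n].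
Proof. by []. Qed.

Lemma cat_cons_uniq (T : eqType) (x : T) l1 l2 r1 r2 : x \notin l1 -> x \notin r1 ->
  l1 ++ x :: l2 = r1 ++ x :: r2 -> l1 = r1 /\ l2 = r2.
Proof.
move=> h1 h2 e.
have : index x (l1 ++ x :: l2) = index x (r1 ++ x :: r2) by rewrite e.
rewrite !index_cat (negPf h1) (negPf h2) /= eqxx !addn0 => es.
split.
  by rewrite -(take_size_cat (x :: l2) (erefl (size l1))) e take_size_cat.
have := congr1 (drop (size l1).+1) e.
by rewrite -cat_rcons drop_size_cat ?size_rcons // es -cat_rcons drop_size_cat ?size_rcons.
Qed.


Lemma ilv_size (r : rel R) mu nu : ilv r mu nu -> size mu = (size nu).+1.
Proof.
elim: mu nu => [|x mu IH] nu //; case: mu IH => [|x' m] IH.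
  by case: nu => [|y n] //= /and3P [].
case: nu => [|y n] //; rewrite ilv_cons => /and3P [_ _ h].
by have /= -> := IH _ h.
Qed.

Lemma ilv_nth (r : rel R) mu nu : ilv r mu nu ->
  forall i, (i.+1 < size mu)%N -> r mu`_i nu`_i && r nu`_i mu`_i.+1.
Proof.
elim: mu nu => [|x mu IH] nu //; case: mu IH => [|x' m] IH.
  by case: nu => [|y n] //= _ [].
case: nu => [|y n] //; rewrite ilv_cons => /and3P [h1 h2 h3].
case=> [|i] hi /=; first by rewrite h1 h2.
exact: IH h3 i hi.
Qed.

Lemma ilv_sorted (r : rel R) : transitive r -> forall mu nu, ilv r mu nu -> sorted r mu && sorted r nu.
Proof.
move=> tr; elim=> [|x mu IH] nu //; case: mu IH => [|x' m] IH.
  by case: nu => [|y n] //= /and3P [].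
case: nu => [|y n] //; rewrite ilv_cons => /and3P [h1 h2 h3].
have /andP [s1 s2] := IH _ h3; move: s1 => /= s1.
rewrite /= (tr _ _ _ h1 h2) s1 /=.
case: n h3 s2 => [|y' n] // h3 s2; rewrite /=; move: s2 => /= ->; rewrite andbT.
case: m {IH s1} h3 => [|x'' m]; first by move=> /and3P [_ _]; case: n.
by rewrite ilv_cons => /and3P [h _ _]; apply: (tr x') h2 h.
Qed.

Lemma ilv_ltW mu nu : ilv <%R mu nu -> ilv <=%R mu nu.
Proof.
elim: mu nu => [|x mu IH] nu //; case: mu IH => [|x' m] IH.
  by case: nu => [|y n] //= /and3P [].
case: nu => [|y n] //; rewrite !ilv_cons => /and3P [h1 h2 h3].
by rewrite (ltW h1) (ltW h2) IH.
Qed.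

Fixpoint ins (r : R) (s : seq R) : seq R :=
  if s is x :: s' then (if r <= x then r :: s else x :: ins r s') else [:: r].

Lemma ins_cons r x s : ins r (x :: s) = if r <= x then r :: x :: s else x :: ins r s.
Proof. by []. Qed.

Lemma ins_perm r s : perm_eq (ins r s) (r :: s).
Proof.
elim: s => [|x s IH] //=; case: ifP => _ //.
apply: (@perm_trans _ (x :: r :: s)); first by rewrite perm_cons.
by rewrite (perm_catCA [:: x] [:: r] s).
Qed.

Lemma ins_ilv r mu nu : ilv <=%R mu nu -> ilv <=%R (ins r mu) (ins r nu).
Proof.
elim: mu nu => [|x mu IH] nu //.
case: mu IH => [|x' m] IH.
  case: nu => [|y nu]; last by move=> /and3P [].
  move=> _ /=; case: lerP => h /=.
    by rewrite lexx h.
  by rewrite lexx (ltW h).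
case: nu => [|y n] //; rewrite ilv_cons => /and3P [h1 h2 h3].
rewrite ins_cons [ins r (y :: n)]ins_cons.
case: (lerP r x) => rx.
  by rewrite (le_trans rx h1) !ilv_cons lexx rx h1 h2 /=.
case: (lerP r y) => ry.
  rewrite ins_cons (le_trans ry h2) !ilv_cons (ltW rx) lexx /=.
  by rewrite ry h2 /=.
have [c [t [ect yc]]] : exists c t, ins r (x' :: m) = c :: t /\ y <= c.
  rewrite ins_cons; case: ifP => _.
    by exists r, (x' :: m); rewrite (ltW ry).
  by exists x', (ins r m).
have := IH _ h3; rewrite ect => ih.
by rewrite ilv_cons h1 yc ih.
Qed.

Lemma foldr_ins_ilv L mu nu : ilv <=%R mu nu ->
  ilv <=%R (foldr ins mu L) (foldr ins nu L).
Proof. by elim: L => [|a L IH] //= h; apply: ins_ilv; apply: IH. Qed.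

Lemma foldr_ins_perm L s : perm_eq (foldr ins s L) (L ++ s).
Proof.
elim: L => [|a L IH] //=; apply: (perm_trans (ins_perm _ _)).
by rewrite perm_cons.
Qed.

Section Claim.
Variables A B : {poly R}.
Hypothesis A0 : A != 0.
Hypothesis B0 : B != 0.
Hypothesis hAB : forall x, root A x -> ~~ root B x.
Let BA := B * A.
Let BA0 : BA != 0. Proof. by rewrite mulf_neq0. Qed.

Lemma rootBA x : root BA x = root B x || root A x. Proof. by rewrite rootM. Qed.

Lemma cindex_split_root a b x : x \in `]a, b[ -> root A x ->
  cindex a b B A = cindex a x B A + jump B A x + cindex x b B A.
Proof.
by move=> hx hr; rewrite /cindex (roots_split A0 hx) hr !big_cat /= big_seq1 addrA.
Qed.

Lemma cindex_split_noroot a b x : x \in `]a, b[ -> ~~ root A x ->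
  cindex a b B A = cindex a x B A + cindex x b B A.
Proof.
by move=> hx hr; rewrite /cindex (roots_split A0 hx) (negPf hr) !big_cat /= big_nil add0r.
Qed.

Lemma cindex_nil a b : {in `]a, b[, forall z, ~~ root A z} -> cindex a b B A = 0.
Proof. by move=> h; rewrite /cindex no_root_roots // big_nil. Qed.

Lemma jump_range x : -1 <= jump B A x <= 1.
Proof. by rewrite /jump; case: (sgp_right _ _ < 0); case: (_ != 0); case: odd. Qed.

Lemma jump_m1 x : jump B A x = -1 ->
  [/\ root A x, odd (\mu_x BA) & sgp_right BA x < 0].
Proof.
move=> hj; have rA : root A x.
  by apply/negPn/negP => nr; move: hj; rewrite noroot_jump.
have muB : \mu_x B = 0%N by apply: muNroot; apply: hAB.
rewrite /BA; move: hj; rewrite /jump muB subn0 B0 /= mu_mul // muB add0n.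
case: (sgp_right (B * A) x < 0); case: (odd (\mu_x A)) => /= /eqP //.
Qed.

Lemma first_hit a b : a < b -> cindex a b B A <= -1 ->
  exists x, [/\ x \in `]a, b[, root A x, jump B A x = -1, cindex a x B A = 0
             & cindex x b B A = cindex a b B A + 1].
Proof.
move=> ab hI.
have [l1 [x [l2 [hl s1 wx]]]] := @first_neg _ (jump B A) (roots A a b) 0 jump_range hI.
have xin : x \in roots A a b by rewrite hl mem_cat mem_head orbT.
have hx : x \in `]a, b[ by apply: roots_in xin.
have rx : root A x by apply: root_roots xin.
have hs := roots_split A0 hx; rewrite rx /= in hs.
have u := uniq_roots a b A.
have nx1 : x \notin l1 by move: u; rewrite hl cat_uniq /= negb_or => /and3P [_ /andP [-> _] _].
have nx2 : x \notin roots A a x by rewrite in_roots in_itv /= ltxx !(andbF, andFb).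
have [e1 e2] := cat_cons_uniq nx1 nx2 (etrans (esym hl) hs).
exists x; split => //; first by rewrite /cindex -e1 s1.
rewrite /cindex hs big_cat big_cons -e1 s1 wx /=.
ring.
Qed.


Lemma left_nb a x : a < x -> exists y, [/\ a < y, y < x, ~~ root BA y,
  cindex a y B A = cindex a x B A & Num.sg BA.[y] = (-1) ^+ odd (\mu_x BA) * sgp_right BA x].
Proof.
move=> ax; have [y hy] := neighpl_wit (p:=BA) ax BA0.
have hy' := hy; move: hy'; rewrite /neighpl in_itv /= => /andP [py yx].
have := prev_root_in BA a x; rewrite in_itv /= => /andP [mp _].
have ay : a < y by apply: le_lt_trans py; rewrite (min_l (ltW ax)) in mp.
have ny := neighpl_root hy.
have nyA : ~~ root A y by move: ny; rewrite rootBA negb_or => /andP [].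
exists y; split => //; last exact: (sgr_neighpl hy).
rewrite (@cindex_split_noroot a x y) ?in_itv /= ?ay ?yx // [cindex y x B A]cindex_nil ?addr0 //.
move=> z; rewrite in_itv /= => /andP [yz zx].
have : z \in neighpl BA a x by rewrite /neighpl in_itv /= zx (lt_trans py yz).
by move/neighpl_root; rewrite rootBA negb_or => /andP [].
Qed.

Lemma right_nb x b : x < b -> exists y, [/\ x < y, y < b, ~~ root BA y,
  cindex y b B A = cindex x b B A & Num.sg BA.[y] = sgp_right BA x].
Proof.
move=> xb; have [y hy] := neighpr_wit (p:=BA) xb BA0.
have hy' := hy; move: hy'; rewrite /neighpr in_itv /= => /andP [xy yn].
have := next_root_in BA x b; rewrite in_itv /= => /andP [_ nm].
have yb : y < b by move: nm; rewrite (max_l (ltW xb)); apply: lt_le_trans yn.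
have ny := neighpr_root hy.
have nyA : ~~ root A y by move: ny; rewrite rootBA negb_or => /andP [].
exists y; split => //; last exact: (sgr_neighpr hy).
rewrite [RHS](@cindex_split_noroot x b y) ?in_itv /= ?xy ?yb // [cindex x y B A]cindex_nil ?add0r //.
move=> z; rewrite in_itv /= => /andP [xz zy].
have : z \in neighpr BA x b by rewrite /neighpr in_itv /= xz (lt_trans zy yn).
by move/neighpr_root; rewrite rootBA negb_or => /andP [].
Qed.

Lemma claim_step a b : a < b -> ~~ root BA a -> cindex a b B A <= -1 ->
  exists x y', [/\ root A x, a < x, x < y', y' < b & ~~ root BA y'] /\
     [/\ BA.[y'] < 0, cindex y' b B A = cindex a b B A + 1 &
        (BA.[a] < 0 -> exists2 y0, root B y0 & a < y0 < x)].
Proof.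
move=> ab na hI.
have [x [hx rx jx cax cxb]] := first_hit ab hI.
have [_ oddx sx] := jump_m1 jx.
have /andP [ax xb] : (a < x) && (x < b) by rewrite in_itv in hx.
have [y' [xy' y'b ny' cy' sy']] := right_nb xb.
have spx : sgp_right BA x = -1 by rewrite -sy' ltr0_sg // -sgr_lt0 sy'.
exists x, y'; split => //; split.
- by rewrite -sgr_lt0 sy' spx ltrN10.
- by rewrite cy'.
move=> neg; have [y [ay yx ny cay sy]] := left_nb ax.
have posy : 0 < BA.[y] by rewrite -sgr_gt0 sy oddx spx expr1 mulN1r opprK ltr01.
have nABa : ~~ root (A * B) a by rewrite mulrC.
have nABy : ~~ root (A * B) y by rewrite mulrC.
have := cindex_inv ay nABa nABy.
have eAB : A * B = BA by rewrite mulrC.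
rewrite cay cax add0r /cross /variation eAB (gtr0_sgz posy) (pmulr_llt0 _ posy) neg /= mulr1.
case E: (roots B a y) => [|y0 r].
  by rewrite /cindex E big_nil => /esym/eqP; rewrite oner_eq0.
move=> _; have y0in : y0 \in roots B a y by rewrite E mem_head.
exists y0; first exact: root_roots y0in.
have := roots_in y0in; rewrite in_itv /= => /andP [-> y0y].
exact: lt_trans y0y yx.
Qed.

Lemma claim k : forall a b, a < b -> ~~ root BA a -> cindex a b B A <= - (k.+1)%:Z ->
  exists mu nu, [/\ size mu = k.+1, ilv <%R mu nu, all (root A) mu, all (root B) nu &
     a < head 0 mu /\ (BA.[a] < 0 -> exists2 y0, root B y0 & a < y0 < head 0 mu)].
Proof.
elim: k => [|k IH] a b ab na hI;
  have [x [y' [[rx ax xy' y'b ny'] [negy' cy' hy0]]]] := claim_step ab na (int_le1 hI).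
  by exists [:: x], [::]; split => //=; rewrite rx.
have hI' : cindex y' b B A <= -(k.+1)%:Z by rewrite cy'; apply: int_L4.
have [mu' [nu' [smu ilv' allA allB [ahead hy0']]]] := IH y' b y'b ny' hI'.
have [y0 ry0 /andP [y'y0 y0h]] := hy0' negy'.
exists (x :: mu'), (y0 :: nu'); split => //; first by rewrite /= smu.
- case: mu' smu ilv' allA ahead hy0' y0h => // x' mu' _ ilv' _ _ _ y0h.
  by rewrite ilv_cons ilv' y0h (lt_trans xy' y'y0).
- by rewrite /= rx.
- by rewrite /= ry0.
Qed.

Lemma interlace k : cindexR B A = - (k.+1)%:Z ->
  exists mu nu, [/\ size mu = k.+1, ilv <%R mu nu, all (root A) mu & all (root B) nu].
Proof.
move=> hI; set c := cauchy_bound BA.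
have c0 : 0 < c := cauchy_bound_gt0 BA.
have hl := le_cauchy_bound BA0; have hr := ge_cauchy_bound BA0.
have nA : forall z, ~~ root BA z -> ~~ root A z by move=> z; rewrite rootBA negb_or => /andP [].
rewrite -(@cindexRP _ B A (-c) c) in hI; last 2 first.
- by move=> z hz; apply: nA; apply: hl.
- by move=> z hz; apply: nA; apply: hr.
have ab : - c < c by rewrite -subr_gt0 opprK addr_gt0.
have na : ~~ root BA (- c) by apply: hl; rewrite in_itv /= lexx.
have hI' : cindex (-c) c B A <= - (k.+1)%:Z by rewrite hI.
have [mu [nu [h1 h2 h3 h4 _]]] := claim ab na hI'.
by exists mu, nu.
Qed.
End Claim.
End B.

Section C.
Variable R : rcfType.
Implicit Types (A B p q : {poly R}).

Lemma decomp1 : decomp (1 : {poly R[i]}) 1 0.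
Proof. by move=> i; rewrite !coef1 coef0; case: i. Qed.

Lemma nat_aux s t : (s <= 1)%N -> ((s + t).-1 <= t)%N. Proof. lia. Qed.

Lemma decomp_inj (g g' : {poly R[i]}) A B : decomp g A B -> decomp g' A B -> g = g'.
Proof. by move=> h1 h2; apply/polyP => i; rewrite h1 h2. Qed.

Lemma lin_step A B (a b : R) : A \is monic -> (size B < size A)%N ->
  let A' := ('X - a%:P) * A + b%:P * B in
  let B' := ('X - a%:P) * B - b%:P * A in
  [/\ A' \is monic, size A' = (size A).+1 & (size B' <= size A)%N].
Proof.
move=> mA sBA A' B'.
set u := 'X - a%:P.
have su : size u = 2%N by rewrite size_XsubC.
have A0 : A != 0 by apply: monic_neq0.
have suA : size (u * A)%R = (size A).+1.
  by rewrite size_monicM ?monicXsubC // su.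
have h1 := size_polyMleq b%:P B.
have h2 := size_polyC_leq1 b.
have h3 := size_polyMleq u B.
have h4 := size_polyMleq b%:P A.
have sbB : (size (b%:P * B)%R < size (u * A)%R)%N.
  rewrite suA ltnS (leq_trans h1) // (leq_trans _ (ltnW sBA)) //.
  by case: (size b%:P) h2 => [|[|]] //= _; apply: leq_pred.
split.
- by rewrite /A' monicE lead_coefDl // lead_coef_monicM ?monicXsubC // (eqP mA).
- by rewrite /A' size_addl.
rewrite /B' -/u (leq_trans (size_polyD _ _)) // geq_max size_polyN.
apply/andP; split.
  by apply: (leq_trans h3); rewrite su /=.
by apply: (leq_trans h4); apply: nat_aux.
Qed.


Lemma int_cnt1 (m p : nat) : (m%:Z - p%:Z) - (-1) = (m.+1)%:Z - p%:Z. Proof. lia. Qed.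
Lemma int_cnt2 (m p : nat) : (m%:Z - p%:Z) - 1 = m%:Z - (p.+1)%:Z. Proof. lia. Qed.

Lemma nonreal_part (s : seq R[i]) : all (fun z => complex.Im z != 0) s ->
  exists A B, [/\ decomp (\prod_(z <- s) ('X - z%:P)) A B, A \is monic,
     size A = (size s).+1, (size B <= size s)%N &
     cindexR B A = (count (fun z => complex.Im z < 0) s)%:Z
                   - (count (fun z => 0 < complex.Im z) s)%:Z].
Proof.
elim: s => [|z s IH] /=.
  move=> _; exists 1, 0; split.
  - by rewrite big_nil; apply: decomp1.
  - exact: monic1.
  - by rewrite size_poly1.
  - by rewrite size_poly0.
  - by rewrite cindexR0p.
move=> /andP [bz hs]; have [A [B [hd mA sA sB hI]]] := IH hs.
have sBA : (size B < size A)%N by rewrite sA ltnS.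
have [mA' sA' sB'] := lin_step (complex.Re z) (complex.Im z) mA sBA.
eexists; eexists; split; first by rewrite big_cons; apply: decomp_mulX hd.
- exact: mA'.
- by rewrite sA' sA.
- by rewrite -sA.
rewrite KL_step // hI.
case: (ltrgtP (complex.Im z) 0) bz => hz // _.
  by rewrite (ltr0_sgz hz) /= add1n add0n int_cnt1.
by rewrite (gtr0_sgz hz) /= add1n add0n int_cnt2.
Qed.

Lemma real_part (s : seq R[i]) g A B : all (fun z => complex.Im z == 0) s -> decomp g A B ->
  decomp (\prod_(z <- s) ('X - z%:P) * g)
         ((\prod_(z <- s) ('X - (complex.Re z)%:P)) * A)
         ((\prod_(z <- s) ('X - (complex.Re z)%:P)) * B).
Proof.
move=> + hd; elim: s => [|z s IH] /=; first by rewrite !big_nil !mul1r.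
move=> /andP [/eqP bz hs]; rewrite !big_cons -!mulrA.
have := decomp_mulX z (IH hs).
by rewrite bz polyC0 !mul0r addr0 subr0.
Qed.

Lemma no_common (s : seq R[i]) A B : all (fun z => complex.Im z != 0) s ->
  decomp (\prod_(z <- s) ('X - z%:P)) A B -> forall x, root A x -> ~~ root B x.
Proof.
move=> hs hd x /factor_theorem [A1 eA]; apply/negP => /factor_theorem [B1 eB].
have hd1 := decomp_mulX (Complex x 0) (decomp_fpoly A1 B1).
rewrite /= polyC0 !mul0r addr0 subr0 [_ * A1]mulrC [_ * B1]mulrC -eA -eB in hd1.
have eg := decomp_inj hd hd1.
have : root (\prod_(z <- s) ('X - z%:P)) (Complex x 0).
  by rewrite eg rootM root_XsubC eqxx.
rewrite root_prod_XsubC => /(allP hs) /=.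
by rewrite eqxx.
Qed.

Lemma count3g (T : Type) (a b c : pred T) (s : seq T) :
  (forall x, addn (addn (a x) (b x)) (c x) = 1%N) ->
  addn (addn (count a s) (count b s)) (count c s) = size s.
Proof. move=> H; elim: s => [|x s IH] //=; have := H x; lia. Qed.

Lemma count3 (s : seq R[i]) :
  addn (addn (count (fun z => 0 < complex.Im z) s) (count (fun z => complex.Im z < 0) s))
   (count (fun z => complex.Im z == 0) s) = size s.
Proof.
apply: count3g => z.
by case: (ltrgtP (complex.Im z) 0).
Qed.
End C.

Lemma int_neq (k : nat) : (0 : int) = - (k.+1)%:Z -> False. Proof. lia. Qed.
Lemma int_h1 (a b k : nat) : (a = b + k.+1)%N -> - (a%:Z - b%:Z) = - (k.+1)%:Z. Proof. lia. Qed.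
Lemma int_h2 (a b k : nat) : (a = b + k.+1)%N -> (b%:Z - a%:Z) = - (k.+1)%:Z. Proof. lia. Qed.

Theorem theorem3p2 (R : rcfType) (n : nat) (P Q : {poly R}) (rs : seq R[i]) :
  (1 <= n)%N -> P \is monic -> size P = n.+1 -> (size Q <= n)%N ->
  fpoly P Q = \prod_(z <- rs) ('X - z%:P) ->
  let np := count (fun z => 0 < complex.Im z) rs in
  let nm := count (fun z => complex.Im z < 0) rs in
  let n0 := count (fun z => complex.Im z == 0) rs in
  (n0 < n)%N ->
  let d := (n - 2 * minn np nm)%N in
  exists mu nu : seq R,
    [/\ size mu = d, size nu = d.-1,
        (\prod_(x <- mu) ('X - x%:P) %| P) && (\prod_(x <- nu) ('X - x%:P) %| Q),
        (forall i, (i.+1 < d)%N -> mu`_i <= nu`_i <= mu`_i.+1) &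
        (n0 = 0%N -> forall i, (i.+1 < d)%N -> mu`_i < nu`_i < mu`_i.+1)].
Proof.
move=> n1 mP sP sQ hf np nm n0 hn0 d.
have hd0 : decomp (\prod_(z <- rs) ('X - z%:P)) P Q by rewrite -hf; apply: decomp_fpoly.
have srs : size rs = n.
  have sg : size (\prod_(z <- rs) ('X - z%:P)) = (size rs).+1 by rewrite size_prod_XsubC.
  have mg : \prod_(z <- rs) ('X - z%:P) \is monic by apply: monic_prod_XsubC.
  have lg : (\prod_(z <- rs) ('X - z%:P))`_(size rs) = 1.
    by have := eqP mg; rewrite lead_coefE sg.
  have Pn : P`_n = 1 by have := eqP mP; rewrite lead_coefE sP.
  case: (ltngtP (size rs) n) => h //.
  - have : (\prod_(z <- rs) ('X - z%:P))`_n = 0 by rewrite nth_default // sg.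
    by rewrite hd0 Pn => /eqP; rewrite eq_complex /= oner_eq0.
  - move: lg; rewrite hd0 !nth_default ?sP ?(leq_trans sQ) ?(ltnW h) //.
    by move=> /eqP; rewrite eq_complex /= eq_sym oner_eq0.
have hcnt : (np + nm + n0 = n)%N by rewrite -srs -(count3 rs).
set rsR := [seq z <- rs | complex.Im z == 0].
set rsN := [seq z <- rs | complex.Im z != 0].
have eprod : \prod_(z <- rs) ('X - z%:P)
    = \prod_(z <- rsR) ('X - z%:P) * \prod_(z <- rsN) ('X - z%:P).
  by rewrite !big_filter [LHS](bigID (fun z => complex.Im z == 0)).
have allN : all (fun z => complex.Im z != 0) rsN by apply: filter_all.
have allR : all (fun z => complex.Im z == 0) rsR by apply: filter_all.
have [A [B [hdN mA sA sB hI]]] := nonreal_part allN.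
have hdR := real_part allR hdN; rewrite -eprod in hdR.
set f0 := \prod_(z <- rsR) ('X - (complex.Re z)%:P) in hdR.
have [eP eQ] := decomp_uniq hd0 hdR.
have hAB := no_common allN hdN.
have A0 : A != 0 by apply: monic_neq0.
set L := [seq complex.Re z | z <- rsR].
have sL : size L = n0 by rewrite size_map size_filter.
have ef0 : \prod_(x <- L) ('X - x%:P) = f0 by rewrite big_map.
have cnp : count (fun z => 0 < complex.Im z) rsN = np.
  rewrite count_filter /np; apply: eq_count => z /=.
  by case: (ltrgtP (complex.Im z) 0).
have cnm : count (fun z => complex.Im z < 0) rsN = nm.
  rewrite count_filter /nm; apply: eq_count => z /=.
  by case: (ltrgtP (complex.Im z) 0).
rewrite cnp cnm in hI.
have main : forall B', (forall x, root A x -> ~~ root B' x) ->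
    (forall p, (p %| B') = (p %| B)) -> forall k, cindexR B' A = - (k.+1)%:Z ->
    d = (n0 + k.+1)%N ->
  exists mu nu : seq R,
    [/\ size mu = d, size nu = d.-1,
        (\prod_(x <- mu) ('X - x%:P) %| P) && (\prod_(x <- nu) ('X - x%:P) %| Q),
        (forall i, (i.+1 < d)%N -> mu`_i <= nu`_i <= mu`_i.+1) &
        (n0 = 0%N -> forall i, (i.+1 < d)%N -> mu`_i < nu`_i < mu`_i.+1)].
  move=> B' hAB' hdvd k hI' hdk.
  have B'0 : B' != 0.
    by apply/eqP => e; move: hI'; rewrite e cindexR0p => /int_neq.
  have [mu0 [nu0 [smu0 hil hrA hrB]]] := interlace A0 B'0 hAB' hI'.
  have snu0 : size nu0 = k by have := ilv_size hil; rewrite smu0 => -[].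
  have /andP [so1 so2] := ilv_sorted lt_trans hil.
  have u1 := sorted_uniq lt_trans ltxx so1.
  have u2 := sorted_uniq lt_trans ltxx so2.
  have [q1 eq1] := uniq_roots_prod_XsubC hrA (etrans (uniq_rootsE _) u1).
  have [q2 eq2] := uniq_roots_prod_XsubC hrB (etrans (uniq_rootsE _) u2).
  have d1 : \prod_(x <- mu0) ('X - x%:P) %| A by rewrite eq1 dvdp_mull // dvdpp.
  have d2 : \prod_(x <- nu0) ('X - x%:P) %| B by rewrite -hdvd eq2 dvdp_mull // dvdpp.
  have pm := foldr_ins_perm L mu0; have pn := foldr_ins_perm L nu0.
  have hil2 := foldr_ins_ilv L (ilv_ltW hil).
  have sm : size (foldr (@ins R) mu0 L) = d by rewrite (perm_size pm) size_cat sL smu0 hdk.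
  exists (foldr (@ins R) mu0 L), (foldr (@ins R) nu0 L); split => //.
  - by rewrite (perm_size pn) size_cat sL snu0 hdk addnS.
  - rewrite (perm_big _ pm) (perm_big _ pn) !big_cat /= ef0 eP eQ.
    by rewrite !dvdp_mul ?dvdpp.
  - by move=> i hi; apply: (ilv_nth hil2); rewrite sm.
  - move=> e0 i hi; have -> : L = [::] by apply/eqP; rewrite -size_eq0 sL e0.
    by apply: (ilv_nth hil); rewrite smu0 -(add0n k.+1) -e0 -hdk.
case: (ltngtP np nm) => hnp.
- have [k hk] : exists k, nm = (np + k.+1)%N by exists (nm - np).-1; lia.
  apply: (main (- B)).
  + by move=> x /hAB; rewrite rootN.
  + by move=> p; rewrite dvdpNr.
  + by rewrite -scaleN1r cindexR_Z sgzN sgz1 mulN1r hI (int_h1 hk).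
  + rewrite /d; lia.
- have [k hk] : exists k, np = (nm + k.+1)%N by exists (np - nm).-1; lia.
  apply: (main B) => //.
  + by rewrite hI (int_h2 hk).
  + rewrite /d; lia.
have dn0 : d = n0 by rewrite /d; lia.
case EL: L sL ef0 => [|r0 L'] sL' ef0'.
  exists [::], [::]; rewrite dn0 -sL' /=; split => //.
  by rewrite big_nil !dvd1p.
have pm := foldr_ins_perm L' [:: r0]; have pn := foldr_ins_perm L' [::].
have hil2 : ilv <=%R (foldr (@ins R) [:: r0] L') (foldr (@ins R) [::] L').
  exact: foldr_ins_ilv.
have sm : size (foldr (@ins R) [:: r0] L') = d.
  by rewrite (perm_size pm) size_cat addn1 dn0 -sL'.
exists (foldr (@ins R) [:: r0] L'), (foldr (@ins R) [::] L'); split => //.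
- by rewrite (perm_size pn) cats0 dn0 -sL'.
- rewrite (perm_big _ pm) (perm_big _ pn) cats0 big_cat big_seq1 /= eP eQ.
  rewrite -ef0' big_cons mulrC.
  by rewrite dvdp_mulr ?dvdpp //= dvdp_mulr // dvdp_mull // dvdpp.
- by move=> i hi; apply: (ilv_nth hil2); rewrite sm.
- by move=> e0; move: sL'; rewrite e0.
Qed.
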